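(* Let $U$ be a nonempty open subset of $\mathbb{R}^n$, let $L>0$, and let $g:\mathbb{R}^n\to\mathbb{R}$ be differentiable on $U$ and satisfy $0\le g(y)-g(x)-\langle\nabla g(x),y-x\rangle\le L\|y-x\|^2$ for all $y\in\mathbb{R}^n$ and all $x\in U$. Then $(2L)^{-1}\nabla g$ is firmly nonexpansive on $U$, i.e. $(2L)^{-1}\|\nabla g(y)-\nabla g(x)\|^2\le\langle\nabla g(x)-\nabla g(y),x-y\rangle$ for all $x,y\in U$. *)

(* Defs.v *)
(* R^n is 'rV[R]_n over an arbitrary realType R. *)
From HB Require Import structures.
From mathcomp Require Import all_boot all_order all_algebra.
From mathcomp Require Import all_classical all_reals all_analysis.
Set Implicit Arguments. Unset Strict Implicit. Unset Printing Implicit Defensive.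
Import Order.TTheory GRing.Theory Num.Theory.
Import numFieldNormedType.Exports.
Local Open Scope ring_scope.
Local Open Scope classical_set_scope.

Definition dotp {R : realType} {n : nat} (u v : 'rV[R]_n) : R :=
  \sum_(i < n) u ord0 i * v ord0 i.

Definition sqnorm {R : realType} {n : nat} (u : 'rV[R]_n) : R := dotp u u.

(* gradient: the vector of partial derivatives, read off the (Frechet)
   differential 'd g x on the standard basis vectors *)
Definition grad {R : realType} {n : nat} (g : 'rV[R]_n -> R) (x : 'rV[R]_n)
  : 'rV[R]_n := \row_(i < n) ('d g x) (delta_mx ord0 i).

(* Main.v *)
Require Import Defs.
From HB Require Import structures.
From mathcomp Require Import all_boot all_order all_algebra.
From mathcomp Require Import all_classical all_reals all_analysis.
From mathcomp Require Import ring lra.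
Import Order.TTheory GRing.Theory Num.Theory.
Import numFieldNormedType.Exports.
Local Open Scope ring_scope.
Local Open Scope classical_set_scope.

Section Dot.
Variables (R : realType) (n : nat).
Implicit Types u v w : 'rV[R]_n.

Lemma dotpC u v : dotp u v = dotp v u.
Proof. by rewrite /dotp; apply: eq_bigr => i _; rewrite mulrC. Qed.

Lemma dotpDl u v w : dotp (u + v) w = dotp u w + dotp v w.
Proof. by rewrite /dotp -big_split; apply: eq_bigr => i _; rewrite mxE mulrDl. Qed.

Lemma dotpZl (k : R) u w : dotp (k *: u) w = k * dotp u w.
Proof. by rewrite /dotp mulr_sumr; apply: eq_bigr => i _; rewrite mxE mulrA. Qed.

Lemma dotpNl u w : dotp (- u) w = - dotp u w.
Proof. by rewrite -scaleN1r dotpZl mulN1r. Qed.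

Lemma dotpBl u v w : dotp (u - v) w = dotp u w - dotp v w.
Proof. by rewrite dotpDl dotpNl. Qed.

Lemma dotpDr u v w : dotp w (u + v) = dotp w u + dotp w v.
Proof. by rewrite dotpC dotpDl !(dotpC w). Qed.

Lemma dotpZr (k : R) u w : dotp w (k *: u) = k * dotp w u.
Proof. by rewrite dotpC dotpZl dotpC. Qed.

Lemma dotpNr u w : dotp w (- u) = - dotp w u.
Proof. by rewrite dotpC dotpNl dotpC. Qed.

Lemma dotpBr u v w : dotp w (u - v) = dotp w u - dotp w v.
Proof. by rewrite dotpDr dotpNr. Qed.
End Dot.

Lemma key (R : realType) (n : nat) (L : R) (G : 'rV[R]_n -> R)
  (x y a b : 'rV[R]_n) : 0 < L ->
  (forall z, 0 <= G z - G x - dotp a (z - x)) ->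
  (forall z, G z - G x - dotp a (z - x) <= L * sqnorm (z - x)) ->
  (forall z, 0 <= G z - G y - dotp b (z - y)) ->
  (forall z, G z - G y - dotp b (z - y) <= L * sqnorm (z - y)) ->
  (2 * L)^-1 * sqnorm (b - a) <= dotp (a - b) (x - y).
Proof.
move=> L0 Lx Ux Ly Uy.
pose d := b - a; pose c := (2 * L)^-1.
pose z1 := y - c *: d; pose z2 := x + c *: d.
have H1 := Lx z1; have H2 := Uy z1; have H3 := Ly z2; have H4 := Ux z2.
have e1 : z1 - x = (y - x) - c *: d by rewrite /z1 addrAC.
have e2 : z1 - y = - (c *: d) by rewrite /z1 addrAC subrr add0r.
have e3 : z2 - y = - (y - x) + c *: d by rewrite /z2 opprB addrAC.
have e4 : z2 - x = c *: d by rewrite /z2 addrAC subrr add0r.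
rewrite e1 dotpBr dotpZr in H1.
rewrite /sqnorm e2 !(dotpNr, dotpNl, opprK) !dotpZr !dotpZl in H2.
rewrite e3 dotpDr dotpNr dotpZr in H3.
rewrite /sqnorm e4 !dotpZr !dotpZl in H4.
have es : dotp d d = dotp b d - dotp a d by rewrite /d dotpBl.
have eg : dotp (a - b) (x - y) = dotp b (y - x) - dotp a (y - x).
  by rewrite !dotpBl !dotpBr; lra.
rewrite /sqnorm -/d eg.
have Lc : forall t, L * (c * (c * t)) = c / 2 * t.
  move=> t; rewrite /c; field; rewrite ?mulf_neq0 ?gt_eqF //; lra.
rewrite Lc in H2; rewrite Lc in H4; rewrite -/c.
move: H1 H2 H3 H4; rewrite es.
move: (dotp a d) (dotp b d) => p q.
rewrite !mulrBr.
lra.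
Qed.

Theorem mainTheorem14 (R : realType) (n : nat) (U : set 'rV[R]_n) (L : R)
  (g : 'rV[R]_n -> R) :
  open U -> U !=set0 -> 0 < L ->
  (forall x, U x -> differentiable g x) ->
  (forall x y, U x ->
     0 <= g y - g x - dotp (grad g x) (y - x) /\
     g y - g x - dotp (grad g x) (y - x) <= L * sqnorm (y - x)) ->
  forall x y, U x -> U y ->
    (2 * L)^-1 * sqnorm (grad g y - grad g x)
      <= dotp (grad g x - grad g y) (x - y).
Proof.
move=> _ _ L0 _ H x y Ux Uy.
apply: key => // z; [exact: (H x z Ux).1|exact: (H x z Ux).2|exact: (H y z Uy).1|exact: (H y z Uy).2].
Qed.
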